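(* Consider the setting in the context and let the sequences be generated by the adaptive-quantization algorithm with positive nonincreasing step sizes $\alpha(k)$. For each $i$ and $k$ let $$\mathbf{v}_i(k)=\mathbf{x}_i(k)-\mathbf{q}_i(k)+\sum_{j=1}^n a_{ij}\mathbf{q}_j(k)-\alpha(k)\mathbf{g}_i(\mathbf{x}_i(k)),\qquad \boldsymbol{\xi}_i(\mathbf{v}_i(k))=\mathbf{v}_i(k)-[\mathbf{v}_i(k)]_{\mathcal{X}},$$ so that $\mathbf{x}_i(k+1)=[\mathbf{v}_i(k)]_{\mathcal{X}}$, and let $\Delta_i(k)=\mathbf{x}_i(k)-\mathbf{q}_i(k)$. Then for all $i\in\mathcal{V}$, $$\|\boldsymbol{\xi}_i(\mathbf{v}_i(k))\|\le\sum_{j\in\mathcal{N}_i}a_{ij}\|\Delta_i(k)-\Delta_j(k)\|+L_i\alpha(k),$$ and, with $L=\sum_{i}L_i$, $$\sum_{i=1}^n\|\boldsymbol{\xi}_i(\mathbf{v}_i(k))\|^2\le 8\sum_{i=1}^n\|\Delta_i(k)\|^2+2L^2\alpha^2(k).$$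
   Context: $\mathcal{X}\subset\mathbb{R}^d$ is a nonempty compact convex set contained in a box $[\boldsymbol{\ell},\mathbf{u}]$; $[\cdot]_{\mathcal{X}}$ is Euclidean projection. For $i\in\mathcal{V}=\{1,\dots,n\}$, $f_i:\mathbb{R}^d\to\mathbb{R}$ is convex with chosen subgradients $\mathbf{g}_i(\mathbf{x})\in\partial f_i(\mathbf{x})$ satisfying $\|\mathbf{g}_i(\mathbf{x})\|\le L_i$ on $\mathcal{X}$. $\mathcal{G}=(\mathcal{V},\mathcal{E})$ is a connected undirected graph, $\mathcal{N}_i$ the neighbors of $i$; $\mathbf{A}=(a_{ij})$ is doubly stochastic, irreducible, aperiodic, with $a_{ij}>0$ iff $(i,j)\in\mathcal{E}$ and $a_{ij}=0$ otherwise (diagonal entries are self-weights); $\sigma_2\in(0,1)$ is its second largest singular value; $L=\sum_i L_i$, $\gamma=48(2+L)/(1-\sigma_2)$; $b$ is the number of bits. Quantizer: for a box in $\mathbb{R}^d$, each coordinate interval is split by $2^b$ equally spaced points (endpoints included); a value is mapped coordinatewise to the nearest grid point (ties toward the smaller); $\mathcal{Q}_k$ is this map over the box used at time $k$. Algorithm: all nodes initialize $\mathbf{x}_i(0)=\mathbf{q}_i(0)$ at one common grid point of the grid of $[\boldsymbol{\ell},\mathbf{u}]$. At each $k\ge0$: $\mathbf{x}_i(k+1)=[\mathbf{x}_i(k)-\mathbf{q}_i(k)+\sum_j a_{ij}\mathbf{q}_j(k)-\alpha(k)\mathbf{g}_i(\mathbf{x}_i(k))]_{\mathcal{X}}$,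 and $\mathbf{q}_i(k+1)=\mathcal{Q}_{k+1}(\mathbf{x}_i(k+1))$ over the box $[\mathbf{q}_i(k)-\tfrac{\gamma}{2}\alpha(k)\mathbf{1},\mathbf{q}_i(k)+\tfrac{\gamma}{2}\alpha(k)\mathbf{1}]$ ($\mathbf{1}$ the all-ones vector). The values $\mathbf{q}_j(k)$ are communicated to neighbors exactly via their bit indices. *)

(* Defs.v *)
From HB Require Import structures.
From mathcomp Require Import all_boot all_order all_algebra.
From mathcomp Require Import all_classical all_reals all_analysis.
Set Implicit Arguments. Unset Strict Implicit. Unset Printing Implicit Defensive.
Import Order.TTheory GRing.Theory Num.Theory.
Import numFieldTopology.Exports numFieldNormedType.Exports.
Local Open Scope ring_scope.
Local Open Scope classical_set_scope.

Section Defs.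
Variable R : realType.

Definition edot d (u v : 'rV[R]_d) : R := \sum_(c < d) u 0 c * v 0 c.
Definition enorm d (u : 'rV[R]_d) : R := Num.sqrt (edot u u).

Definition is_euclid_proj d (X : set 'rV[R]_d) (P : 'rV[R]_d -> 'rV[R]_d) : Prop :=
  forall v, X (P v) /\ forall y, X y -> enorm (v - P v) <= enorm (v - y).

Definition convex_fun d (f : 'rV[R]_d -> R) : Prop :=
  forall x y t, 0 <= t -> t <= 1 -> f (t *: x + (1 - t) *: y) <= t * f x + (1 - t) * f y.
Definition is_subgrad d (f : 'rV[R]_d -> R) (x g : 'rV[R]_d) : Prop :=
  forall y, f x + edot g (y - x) <= f y.

Definition doubly_stochastic n (A : 'M[R]_n) : Prop :=
  (forall i j, 0 <= A i j) /\ (forall i, \sum_j A i j = 1) /\ (forall j, \sum_i A i j = 1).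

Definition irreducible_mx n (A : 'M[R]_n) : Prop :=
  forall i j, exists m, 0 < (A ^+ m) i j.

Definition aperiodic_mx n (A : 'M[R]_n) : Prop :=
  forall i, exists M, forall m, (M <= m)%N -> 0 < (A ^+ m) i i.

Definition cnorm n (v : 'cV[R]_n) : R := Num.sqrt (\sum_i v i 0 ^+ 2).

(* s is the second largest singular value of a doubly stochastic A:
   the operator norm of A on the orthogonal complement of the all-ones vector
   (the top singular value 1 being attained on the all-ones vector) *)
Definition second_sv n (A : 'M[R]_n) (s : R) : Prop :=
  (exists v : 'cV[R]_n, \sum_i v i 0 = 0 /\ cnorm v = 1 /\ cnorm (A *m v) = s) /\
  (forall v : 'cV[R]_n, \sum_i v i 0 = 0 -> cnorm (A *m v) <= s * cnorm v).

Definition grid_pt (lo hi : R) (b : nat) (t : nat) : R :=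
  lo + t%:R * (hi - lo) / (2 ^ b - 1)%:R.

(* z is the nearest grid point to y, ties broken toward the smaller point *)
Definition quant1 (lo hi : R) (b : nat) (y z : R) : Prop :=
  exists t : 'I_(2 ^ b),
    z = grid_pt lo hi b t /\
    (forall s : 'I_(2 ^ b), `|y - grid_pt lo hi b t| <= `|y - grid_pt lo hi b s|) /\
    (forall s : 'I_(2 ^ b), (s < t)%N -> `|y - grid_pt lo hi b t| < `|y - grid_pt lo hi b s|).

Definition quant d (lo hi : 'rV[R]_d) (b : nat) (y z : 'rV[R]_d) : Prop :=
  forall c, quant1 (lo 0 c) (hi 0 c) b (y 0 c) (z 0 c).

Definition grid_point d (lo hi : 'rV[R]_d) (b : nat) (z : 'rV[R]_d) : Prop :=
  forall c, exists t : 'I_(2 ^ b), z 0 c = grid_pt (lo 0 c) (hi 0 c) b t.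

Definition const_rv d (a : R) : 'rV[R]_d := \row_(c < d) a.

Definition vv n d (A : 'M[R]_n) (alpha : nat -> R) (g : 'I_n -> 'rV[R]_d -> 'rV[R]_d)
  (x q : nat -> 'I_n -> 'rV[R]_d) (i : 'I_n) (k : nat) : 'rV[R]_d :=
  x k i - q k i + \sum_j A i j *: q k j - alpha k *: g i (x k i).

End Defs.

(* Main.v *)
Require Import Defs.
From HB Require Import structures.
From mathcomp Require Import all_boot all_order all_algebra.
From mathcomp Require Import all_classical all_reals all_analysis.
From mathcomp Require Import ring lra.
Import Order.TTheory GRing.Theory Num.Theory.
Import numFieldTopology.Exports numFieldNormedType.Exports.
Local Open Scope ring_scope.
Local Open Scope classical_set_scope.
Set Implicit Arguments. Unset Strict Implicit.

Section H.
Variable R : realType.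

Lemma sum_prod (I : finType) (F G : I -> R) :
  \sum_i \sum_j F i * G j = (\sum_i F i) * (\sum_j G j).
Proof. rewrite mulr_suml; apply: eq_bigr => i _; by rewrite mulr_sumr. Qed.

Lemma lagrange (I : finType) (w a b : I -> R) : (forall i, 0 <= w i) ->
  (\sum_i w i * a i * b i) ^+ 2 <= (\sum_i w i * a i ^+ 2) * (\sum_i w i * b i ^+ 2).
Proof.
move=> w0.
have H : \sum_i \sum_j w i * w j * (a i * b j - a j * b i) ^+ 2 =
  2 * ((\sum_i w i * a i ^+ 2) * (\sum_i w i * b i ^+ 2) - (\sum_i w i * a i * b i) ^+ 2).
  transitivity (\sum_i \sum_j ((w i * a i ^+ 2) * (w j * b j ^+ 2)
     + (w i * b i ^+ 2) * (w j * a j ^+ 2) - (2 * (w i * a i * b i)) * (w j * a j * b j))).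
    by apply: eq_bigr => i _; apply: eq_bigr => j _; ring.
  under eq_bigr do rewrite sumrB big_split /=.
  rewrite sumrB big_split /= !sum_prod -mulr_sumr.
  ring.
have : 0 <= \sum_i \sum_j w i * w j * (a i * b j - a j * b i) ^+ 2.
  apply: sumr_ge0 => i _; apply: sumr_ge0 => j _; apply: mulr_ge0; [exact: mulr_ge0|exact: sqr_ge0].
rewrite H; lra.
Qed.

Lemma edot_ge0 d (u : 'rV[R]_d) : 0 <= edot u u.
Proof. by apply: sumr_ge0 => c _; rewrite -expr2 sqr_ge0. Qed.

Lemma enorm_ge0 d (u : 'rV[R]_d) : 0 <= enorm u.
Proof. exact: sqrtr_ge0. Qed.

Lemma enorm_sq d (u : 'rV[R]_d) : enorm u ^+ 2 = edot u u.
Proof. by rewrite /enorm sqr_sqrtr // edot_ge0. Qed.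

Lemma edotDl d (u v w : 'rV[R]_d) : edot (u + v) w = edot u w + edot v w.
Proof. rewrite /edot -big_split; apply: eq_bigr => c _; by rewrite mxE mulrDl. Qed.

Lemma edotC d (u v : 'rV[R]_d) : edot u v = edot v u.
Proof. rewrite /edot; apply: eq_bigr => c _; by rewrite mulrC. Qed.

Lemma edotZl d a (u v : 'rV[R]_d) : edot (a *: u) v = a * edot u v.
Proof. rewrite /edot mulr_sumr; apply: eq_bigr => c _; by rewrite mxE mulrA. Qed.

Lemma edot_cs d (u v : 'rV[R]_d) : edot u v ^+ 2 <= edot u u * edot v v.
Proof.
have := @lagrange _ (fun _ => 1) (fun c => u 0 c) (fun c => v 0 c) (fun _ => ler01).
rewrite /edot.
have E : forall F : 'I_d -> R, \sum_c 1 * F c = \sum_c F c.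
  by move=> F; apply: eq_bigr => c _; rewrite mul1r.
have E2 : forall (F : 'I_d -> R), \sum_c F c ^+ 2 = \sum_c F c * F c.
  by move=> F; apply: eq_bigr => c _; rewrite expr2.
under eq_bigr do rewrite -mulrA.
by rewrite !E !E2.
Qed.

Lemma edot_le d (u v : 'rV[R]_d) : edot u v <= enorm u * enorm v.
Proof.
apply: (le_trans (ler_norm _)).
rewrite -sqrtr_sqr /enorm -sqrtrM ?edot_ge0 //.
by apply: ler_wsqrtr; apply: edot_cs.
Qed.

Lemma enorm_tri d (u v : 'rV[R]_d) : enorm (u + v) <= enorm u + enorm v.
Proof.
rewrite {1}/enorm.
have h : edot (u + v) (u + v) <= (enorm u + enorm v) ^+ 2.
  rewrite edotDl (edotC u) (edotC v) !edotDl -(enorm_sq u) -(enorm_sq v) (edotC v u).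
  have := edot_le u v; lra.
apply: (le_trans (ler_wsqrtr h)).
by rewrite sqrtr_sqr ger0_norm // addr_ge0 // enorm_ge0.
Qed.

Lemma enormZ d a (u : 'rV[R]_d) : enorm (a *: u) = `|a| * enorm u.
Proof.
rewrite /enorm edotZl edotC edotZl mulrA -expr2 sqrtrM ?sqr_ge0 //.
by rewrite sqrtr_sqr.
Qed.

Lemma enormN d (u : 'rV[R]_d) : enorm (- u) = enorm u.
Proof. by rewrite -scaleN1r enormZ normrN normr1 mul1r. Qed.

Lemma enorm0 d : enorm (0 : 'rV[R]_d) = 0.
Proof. by rewrite -(scale0r (0 : 'rV[R]_d)) enormZ normr0 mul0r. Qed.

Lemma enorm_sum d (I : finType) (P : pred I) (F : I -> 'rV[R]_d) :
  enorm (\sum_(j | P j) F j) <= \sum_(j | P j) enorm (F j).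
Proof.
elim/big_rec2: _ => [|j y1 y2 _ IH]; first by rewrite enorm0.
by apply: (le_trans (enorm_tri _ _)); rewrite lerD2l.
Qed.


Lemma conv2 d (X : set 'rV[R]_d) : convex_set X ->
  forall (t : R) x y, 0<=t -> t<=1 -> X x -> X y -> X (t *: x + (1-t) *: y).
Proof.
move=> cX t x y t0 t1 Xx Xy.
have := cX x y (Itv01 t0 t1); rewrite !inE => /(_ Xx Xy).
by [].
Qed.

Lemma sum0_seq d (I : eqType) (s : seq I) (w : I -> R) (y : I -> 'rV[R]_d) :
  (forall j, 0 <= w j) -> \sum_(j <- s) w j = 0 -> \sum_(j <- s) w j *: y j = 0.
Proof.
move=> w0; elim: s => [|j s IH]; first by rewrite !big_nil.
rewrite !big_cons => h.
have hs : 0 <= \sum_(j <- s) w j by apply: sumr_ge0.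
have wj := w0 j.
have e1 : w j = 0 by lra.
have e2 : \sum_(j <- s) w j = 0 by lra.
by rewrite e1 scale0r add0r IH.
Qed.

Lemma convsum_seq d (X : set 'rV[R]_d) (I : eqType) (w : I -> R) (y : I -> 'rV[R]_d) :
  convex_set X -> (forall j, 0 <= w j) -> (forall j, X (y j)) ->
  forall s : seq I, 0 < \sum_(j <- s) w j ->
  X ((\sum_(j <- s) w j)^-1 *: \sum_(j <- s) w j *: y j).
Proof.
move=> cX w0 Xy; elim => [|j s IH]; first by rewrite big_nil ltxx.
rewrite !big_cons => hpos.
have hs : 0 <= \sum_(j <- s) w j by apply: sumr_ge0.
have wj := w0 j.
set S := \sum_(j <- s) w j in hs hpos IH *.
have [S0|Spos] := eqVneq S 0.
  rewrite S0 addr0 (sum0_seq y w0 S0) addr0 scalerA mulVf ?scale1r //.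
  by rewrite S0 addr0 in hpos; rewrite gt_eqF.
have Sp : 0 < S by rewrite lt_neqAle eq_sym Spos hs.
pose t := w j / (w j + S).
have -> : (w j + S)^-1 *: (w j *: y j + \sum_(j <- s) w j *: y j) =
   t *: y j + (1 - t) *: (S^-1 *: \sum_(j <- s) w j *: y j).
  rewrite scalerDr !scalerA /t; congr (_ *: _ + _ *: _).
    by rewrite mulrC.
  field; apply/andP; split; rewrite gt_eqF //.
apply: conv2 => //.
- by rewrite /t divr_ge0 // ltW.
- by rewrite /t ler_pdivrMr // mul1r lerDl.
- by apply: IH.
Qed.

Lemma convsum d (X : set 'rV[R]_d) (I : finType) (w : I -> R) (y : I -> 'rV[R]_d) :
  convex_set X -> (forall j, 0 <= w j) -> (forall j, X (y j)) ->
  \sum_j w j = 1 -> X (\sum_j w j *: y j).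
Proof.
move=> cX w0 Xy s1.
have := @convsum_seq d X I w y cX w0 Xy (index_enum I).
rewrite s1 invr1 scale1r; apply; by rewrite ltr01.
Qed.

End H.
Theorem lemma1 (R : realType) (n d b : nat)
  (X : set 'rV[R]_d) (l u : 'rV[R]_d) (P : 'rV[R]_d -> 'rV[R]_d)
  (f : 'I_n -> 'rV[R]_d -> R) (g : 'I_n -> 'rV[R]_d -> 'rV[R]_d) (Lc : 'I_n -> R)
  (adj : rel 'I_n) (A : 'M[R]_n) (sigma2 : R)
  (alpha : nat -> R) (x q : nat -> 'I_n -> 'rV[R]_d) (x0 : 'rV[R]_d) :
  (* the constraint set *)
  X !=set0 -> compact X -> convex_set X ->
  (forall y, X y -> forall c, l 0 c <= y 0 c <= u 0 c) ->
  is_euclid_proj X P ->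
  (* local objectives and bounded chosen subgradients *)
  (forall i, convex_fun (f i)) ->
  (forall i y, is_subgrad (f i) y (g i y)) ->
  (forall i y, X y -> enorm (g i y) <= Lc i) ->
  (* communication graph and weights *)
  (forall i j, adj i j = adj j i) -> (forall i, ~~ adj i i) ->
  (forall i j, connect adj i j) ->
  doubly_stochastic A -> irreducible_mx A -> aperiodic_mx A ->
  (forall i j, i != j -> (0 < A i j <-> adj i j)) ->
  (forall i j, i != j -> ~~ adj i j -> A i j = 0) ->
  second_sv A sigma2 -> 0 < sigma2 < 1 ->
  (* quantizer with b bits *)
  (0 < b)%N ->
  (* step sizes: positive, nonincreasing *)
  (forall k, 0 < alpha k) -> (forall k, alpha k.+1 <= alpha k) ->
  (* the algorithm *)
  grid_point l u b x0 ->
  (forall i, x 0%N i = x0) -> (forall i, q 0%N i = x0) ->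
  (forall k i, x k.+1 i = P (vv A alpha g x q i k)) ->
  (forall k i,
     let w := (48 * (2 + \sum_j Lc j) / (1 - sigma2)) / 2 * alpha k in
     quant (q k i - const_rv d w) (q k i + const_rv d w) b (x k.+1 i) (q k.+1 i)) ->
  (* conclusion (for k = 0 it needs the initial point to lie in X) *)
  forall k, (0 < k)%N \/ X x0 ->
    (forall i,
       enorm (vv A alpha g x q i k - P (vv A alpha g x q i k)) <=
       \sum_(j | adj i j) A i j * enorm ((x k i - q k i) - (x k j - q k j)) + Lc i * alpha k) /\
    \sum_i enorm (vv A alpha g x q i k - P (vv A alpha g x q i k)) ^+ 2 <=
      8 * \sum_i enorm (x k i - q k i) ^+ 2 + 2 * (\sum_i Lc i) ^+ 2 * alpha k ^+ 2.
Proof.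
move=> [y0 Xy0] _ cX _ Pp _ _ gL _ _ _ [A0 [Arow Acol]] _ _ _ Anadj _ _ _
  apos _ _ x0eq _ xS _ k hk.
have xin : forall j, X (x k j).
  case: k hk => [|k'] hk j.
    by case: hk => //; rewrite x0eq.
  by rewrite xS; exact: (Pp _).1.
have Lge0 : forall i, 0 <= Lc i.
  by move=> i; apply: le_trans (gL i y0 Xy0); apply: enorm_ge0.
pose D j := x k j - q k j.
have part1 : forall i,
       enorm (vv A alpha g x q i k - P (vv A alpha g x q i k)) <=
       \sum_(j | adj i j) A i j * enorm ((x k i - q k i) - (x k j - q k j)) + Lc i * alpha k.
  move=> i.
  set v := vv A alpha g x q i k.
  have Xy : X (\sum_j A i j *: x k j) := convsum cX (A0 i) xin (Arow i).
  apply: le_trans ((Pp v).2 _ Xy) _.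
  have -> : v - \sum_j A i j *: x k j =
      \sum_j A i j *: ((x k i - q k i) - (x k j - q k j)) - alpha k *: g i (x k i).
    under [in RHS]eq_bigr do rewrite scalerBr.
    rewrite sumrB -scaler_suml Arow scale1r.
    under [in RHS]eq_bigr do rewrite scalerBr.
    rewrite sumrB /v /vv opprB [in RHS]addrA [LHS]addrAC.
    by [].
  apply: le_trans (enorm_tri _ _) _.
  rewrite enormN enormZ ger0_norm ?(ltW (apos k)) //.
  apply: lerD; last first.
    by rewrite mulrC; apply: ler_wpM2r; [exact: ltW | exact: gL].
  apply: le_trans (enorm_sum _ _) _.
  rewrite (bigID (adj i)) /= [X in _ + X]big1 ?addr0.
    by apply: ler_sum => j _; rewrite enormZ ger0_norm.
  move=> j nj; case: (eqVneq i j) => [<-|ij].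
    by rewrite subrr scaler0 enorm0.
  by rewrite Anadj // scale0r enorm0.
split => //.
pose N j := enorm (x k j - q k j).
pose M i := \sum_j A i j * N j.
have Nge0 : forall j, 0 <= N j by move=> j; apply: enorm_ge0.
have ebound : forall i,
  enorm (vv A alpha g x q i k - P (vv A alpha g x q i k)) <= N i + M i + Lc i * alpha k.
  move=> i; apply: le_trans (part1 i) _; rewrite lerD2r.
  apply: (@le_trans _ _ (\sum_(j | adj i j) A i j * (N i + N j))).
    apply: ler_sum => j _; apply: ler_wpM2l; first exact: A0.
    by apply: le_trans (enorm_tri _ _) _; rewrite enormN.
  apply: (@le_trans _ _ (\sum_j A i j * (N i + N j))).
    rewrite [X in _ <= X](bigID (adj i)) /= lerDl.
    by apply: sumr_ge0 => j _; apply: mulr_ge0; [exact: A0 | exact: addr_ge0].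
  under eq_bigr do rewrite mulrDr.
  by rewrite big_split /= -mulr_suml Arow mul1r.
have sq : forall i,
  enorm (vv A alpha g x q i k - P (vv A alpha g x q i k)) ^+ 2 <=
    4 * N i ^+ 2 + 4 * M i ^+ 2 + (2 * alpha k ^+ 2) * Lc i ^+ 2.
  move=> i; have h := ebound i.
  have h0 := enorm_ge0 (vv A alpha g x q i k - P (vv A alpha g x q i k)).
  have Mge0 : 0 <= M i by apply: sumr_ge0 => j _; apply: mulr_ge0; [exact: A0|exact: Nge0].
  have h2 : enorm (vv A alpha g x q i k - P (vv A alpha g x q i k)) ^+ 2 <=
      (N i + M i + Lc i * alpha k) ^+ 2.
    by rewrite !expr2; apply: ler_pM.
  apply: le_trans h2 _.
  have := sqr_ge0 (N i + M i - Lc i * alpha k); have := sqr_ge0 (N i - M i).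
  nra.
have jen : forall i, M i ^+ 2 <= \sum_j A i j * N j ^+ 2.
  move=> i; have := lagrange (fun j => 1) N (A0 i).
  under eq_bigr do rewrite mulr1.
  under [X in _ <= X * _]eq_bigr do rewrite expr1n mulr1.
  by rewrite Arow mul1r.
have colsum : \sum_i \sum_j A i j * N j ^+ 2 = \sum_j N j ^+ 2.
  rewrite exchange_big; apply: eq_bigr => j _.
  by rewrite -mulr_suml Acol mul1r.
have Lsq : \sum_i Lc i ^+ 2 <= (\sum_i Lc i) ^+ 2.
  rewrite expr2 -sum_prod; apply: ler_sum => i _.
  rewrite (bigD1 i) //= expr2 lerDl.
  by apply: sumr_ge0 => j _; apply: mulr_ge0.
have hM : \sum_i M i ^+ 2 <= \sum_i N i ^+ 2.
  by rewrite -colsum; apply: ler_sum => i _; apply: jen.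
apply: le_trans (ler_sum _ (fun i _ => sq i)) _.
rewrite !big_split /= -!mulr_sumr.
have a2 : 0 <= 2 * alpha k ^+ 2 by rewrite mulr_ge0 // sqr_ge0.
have := ler_wpM2l a2 Lsq.
lra.
Qed.
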